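(* Consider Matching Pennies in the unconstrained setting with the Euclidean regularizer, and suppose both players use OFTRL (optimistic weight $n=1$) with any time delay $m\ge 1$, started from an initial condition that is not the equilibrium (i.e. $(\Delta x_1^1,\Delta x_2^1)\neq(0,0)$ where $\Delta x_i^t=\langle\boldsymbol{x}_i^t,\mathbf{c}\rangle$). Then with learning rate $\eta=O(1/\sqrt{T})$ (sufficiently small), the total regret satisfies $\textsc{RegTot}(T)=\Omega(\sqrt{T})$, treating the size $D$ of the comparator set as a constant.
   Context: Matching Pennies: two players with $\boldsymbol{u}_1=\boldsymbol{A}\boldsymbol{x}_2$, $\boldsymbol{u}_2=-\boldsymbol{A}^{\rm T}\boldsymbol{x}_1$, $\boldsymbol{A}=\begin{pmatrix}1&-1\\-1&1\end{pmatrix}=\mathbf{c}\mathbf{c}^{\rm T}$, $\mathbf{c}=(1,-1)^{\rm T}$. Unconstrained setting: strategies $\boldsymbol{x}_i\in\mathbb{R}^2$. Euclidean regularizer $h(\boldsymbol{x})=\|\boldsymbol{x}\|_2^2/2$. Time-delayed weighted optimistic FTRL with delay $m\in\mathbb{N}$ and weight $n\in\mathbb{N}$ (OFTRL is the case $n=1$): with $\boldsymbol{u}_i^t=\boldsymbol{u}_i(\boldsymbol{x}^t)$ for $t\ge1$ and $\boldsymbol{u}_i^t=\boldsymbol{0}$ for $t\le0$, the strategies evolve by $\boldsymbol{x}_i^{t+1}=\boldsymbol{x}_i^{t}+\eta\boldsymbol{u}_i^{t-m}+n\eta(\boldsymbol{u}_i^{t-m}-\boldsymbol{u}_i^{t-m-1})$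 (the unconstrained Euclidean form of $\boldsymbol{x}_i^{t+1}=\arg\max_{\boldsymbol{x}}\eta\langle\boldsymbol{x},\sum_{s=1}^{t-m}\boldsymbol{u}_i^s+n\boldsymbol{u}_i^{t-m}\rangle-h(\boldsymbol{x})$). Total regret: $\textsc{RegTot}(T)=\max_{\boldsymbol{x}}\sum_{i=1,2}\sum_{t=1}^{T}\langle\boldsymbol{x}_i-\boldsymbol{x}_i^t,\boldsymbol{u}_i^t\rangle$, where in the unconstrained setting the comparator $\boldsymbol{x}_i$ ranges over $\{\boldsymbol{x}_i:\|\boldsymbol{x}_i\|_1\le \frac1T\sum_{t=1}^T\|\boldsymbol{x}_i^t\|_1\}$, and $D:=\min_{i}\|\boldsymbol{x}_i\|_1$ for the maximizing comparator. *)

(* Defs.v *)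
From HB Require Import structures.
From mathcomp Require Import all_boot all_order all_algebra.
From mathcomp Require Import classical_sets reals.
Set Implicit Arguments. Unset Strict Implicit. Unset Printing Implicit Defensive.
Import Order.TTheory GRing.Theory Num.Theory.
Local Open Scope ring_scope.

Definition mp_c {R : realType} : 'cV[R]_2 :=
  \col_(i < 2) (if i == 0 :> nat then 1 else -1).
Definition mp_A {R : realType} : 'M[R]_2 := mp_c *m mp_c^T.

Definition dot {R : realType} (a b : 'cV[R]_2) : R := \sum_(j < 2) a j 0 * b j 0.
Definition l1 {R : realType} (a : 'cV[R]_2) : R := \sum_(j < 2) `|a j 0|.

(* Utilities u_1^t = A x_2^t, u_2^t = - A^T x_1^t for t >= 1, and u_i^t = 0
   for t <= 0.  Time is indexed by nat; all non-positive times are collapsed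
   to index 0 (so truncated subtraction t - m on nat gives the right value). *)
Definition util1 {R : realType} (x2 : nat -> 'cV[R]_2) (t : nat) : 'cV[R]_2 :=
  if t is 0 then 0 else mp_A *m x2 t.
Definition util2 {R : realType} (x1 : nat -> 'cV[R]_2) (t : nat) : 'cV[R]_2 :=
  if t is 0 then 0 else - (mp_A^T *m x1 t).

(* (x1, x2) is the trajectory of time-delayed weighted optimistic FTRL with
   delay m, weight n, learning rate eta, Euclidean regularizer, unconstrained,
   started at (x1 1, x2 1) = (y1, y2):
   x_i^{t+1} = x_i^t + eta u_i^{t-m} + n eta (u_i^{t-m} - u_i^{t-m-1}), t >= 1. *)
Definition oftrl_traj {R : realType} (m n : nat) (eta : R) (y1 y2 : 'cV[R]_2)
    (x1 x2 : nat -> 'cV[R]_2) : Prop :=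
  [/\ x1 1%N = y1, x2 1%N = y2 &
   forall t : nat, (1 <= t)%N ->
     x1 t.+1 = x1 t + eta *: util1 x2 (t - m) +
               (n%:R * eta) *: (util1 x2 (t - m) - util1 x2 (t - m.+1)) /\
     x2 t.+1 = x2 t + eta *: util2 x1 (t - m) +
               (n%:R * eta) *: (util2 x1 (t - m) - util2 x1 (t - m.+1))].

Definition radius {R : realType} (T : nat) (x : nat -> 'cV[R]_2) : R :=
  (T%:R)^-1 * \sum_(1 <= t < T.+1) l1 (x t).

(* Total regret:
   RegTot(T) = max_{||y_i||_1 <= radius_i} sum_i sum_{t=1}^T <y_i - x_i^t, u_i^t>
   (the set is compact, so the supremum is the maximum). *)
Definition RegTot {R : realType} (T : nat) (x1 x2 : nat -> 'cV[R]_2) : R :=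
  sup [set r : R | exists y1 y2 : 'cV[R]_2,
        [/\ l1 y1 <= radius T x1, l1 y2 <= radius T x2 &
            r = \sum_(1 <= t < T.+1)
                  (dot (y1 - x1 t) (util1 x2 t) + dot (y2 - x2 t) (util2 x1 t))]].

(* D = min_i ||y_i||_1 for the maximizing comparator = min of the two radii *)
Definition Dsize {R : realType} (T : nat) (x1 x2 : nat -> 'cV[R]_2) : R :=
  Num.min (radius T x1) (radius T x2).

(* Main.v *)
Require Import Defs.
From HB Require Import structures.
From mathcomp Require Import all_boot all_order all_algebra.
From mathcomp Require Import classical_sets reals.
From mathcomp Require Import ring lra zify.
Import Order.TTheory GRing.Theory Num.Theory.
Local Open Scope ring_scope.
Set Implicit Arguments. Unset Strict Implicit.

Definition ext {R : realType} (a : nat -> R) (r : nat) : R := if r is 0 then 0 else a r.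
Definition srec {R : realType} (m : nat) (h : R) (a b : nat -> R) : Prop :=
  forall t, (1 <= t)%N ->
    a t.+1 = a t + h * (2 * ext b (t - m) - ext b (t - m.+1)) /\
    b t.+1 = b t - h * (2 * ext a (t - m) - ext a (t - m.+1)).
Definition bnd {R : realType} (a b : nat -> R) (t : nat) (G : R) : Prop :=
  forall r, (1 <= r)%N -> (r <= t)%N -> `|a r| <= G /\ `|b r| <= G.

Lemma absle {R : realType} (x c : R) : `|x| <= c <-> (-c <= x /\ x <= c).
Proof. by rewrite ler_norml; split => [/andP|[-> ->]]. Qed.

Lemma bnd_le {R : realType} (a b : nat -> R) t t' G : (t' <= t)%N -> bnd a b t G -> bnd a b t' G.
Proof. move=> le H r r1 rt; apply: H => //; lia. Qed.

Lemma ext_bound {R : realType} (a b : nat -> R) t G r : 0 <= G -> bnd a b t G -> (r <= t)%N ->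
  `|ext a r| <= G /\ `|ext b r| <= G.
Proof.
move=> G0 H; case: r => [|r] rt /=; first by rewrite normr0.
by apply: H.
Qed.

Lemma step_bound {R : realType} m (h : R) a b s G : srec m h a b -> 0 <= h -> 0 <= G ->
  bnd a b s G -> (1 <= s)%N ->
  `|a s.+1 - a s| <= 3 * h * G /\ `|b s.+1 - b s| <= 3 * h * G.
Proof.
move=> rec h0 G0 B s1; have [-> ->] := rec s s1.
have [/absle [? ?] /absle [? ?]] := ext_bound (r:=s - m) G0 B (leq_subr _ _).
have [/absle [? ?] /absle [? ?]] := ext_bound (r:=s - m.+1) G0 B (leq_subr _ _).
split; apply/absle; split; nra.
Qed.

Lemma diff_bound {R : realType} m (h : R) a b t G : srec m h a b -> 0 <= h -> 0 <= G ->
  bnd a b t G -> forall j : nat, (j < t)%N ->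
  `|a (t - j)%N - a t| <= 3 * h * j%:R * G /\ `|b (t - j)%N - b t| <= 3 * h * j%:R * G.
Proof.
move=> rec h0 G0 B; elim=> [|j IH] jt.
  by rewrite subn0 !subrr normr0 mulr0n mulr0 mul0r; split.
have [/absle [? ?] /absle [? ?]] := IH (ltnW jt).
have s1 : (1 <= t - j.+1)%N by lia.
have := step_bound rec h0 G0 (bnd_le (leq_subr j.+1 t) B) s1.
have -> : (t - j.+1).+1 = (t - j)%N by lia.
move=> [/absle [? ?] /absle [? ?]].
rewrite -natr1; split; apply/absle; split; nra.
Qed.

Lemma ext_pos {R : realType} (a : nat -> R) r : (0 < r)%N -> ext a r = a r.
Proof. by case: r. Qed.

Lemma prodle {R : realType} (x y c d : R) : `|x| <= c -> `|y| <= d -> `|x * y| <= c * d.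
Proof. move=> hx hy; rewrite normrM; apply: ler_pM => //. Qed.

Lemma W_close {R : realType} m (h : R) a b t G i : srec m h a b -> 0 <= h -> 0 <= G ->
  bnd a b t G -> (2 * m + 3 <= t)%N -> (i <= m.+1)%N ->
  `|2 * ext a (t - i - m)%N - ext a (t - i - m.+1)%N - a t| <= 18 * (m%:R + 1) * h * G /\
  `|2 * ext b (t - i - m)%N - ext b (t - i - m.+1)%N - b t| <= 18 * (m%:R + 1) * h * G.
Proof.
move=> rec h0 G0 B tm im.
have e1 : (t - i - m)%N = (t - (i + m))%N by lia.
have e2 : (t - i - m.+1)%N = (t - (i + m).+1)%N by lia.
rewrite e1 e2 !ext_pos; try lia.
have [/absle [p1 p2] /absle [p3 p4]] := diff_bound rec h0 G0 B (j := (i + m)%N) ltac:(lia).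
have [/absle [p5 p6] /absle [p7 p8]] := diff_bound rec h0 G0 B (j := (i + m).+1) ltac:(lia).
have hi : i%:R <= m%:R + 1 :> R by rewrite natr1 ler_nat.
have hG : 0 <= h * G by apply: mulr_ge0.
have hGi : h * G * i%:R <= h * G * (m%:R + 1) by apply: ler_wpM2l.
move: p1 p2 p3 p4 p5 p6 p7 p8.
rewrite -!natr1 !natrD => *.
split; apply/absle; split; nra.
Qed.

Lemma X_close {R : realType} m (h : R) a b t G : srec m h a b -> 0 <= h -> 0 <= G ->
  bnd a b t G -> (2 * m + 3 <= t)%N -> forall j : nat, (j <= m.+1)%N ->
  `|a t * b (t - j)%N - b t * a (t - j)%N - h * j%:R * (a t ^+ 2 + b t ^+ 2)|
    <= h * j%:R * (2 * G * (18 * (m%:R + 1) * h * G)).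
Proof.
move=> rec h0 G0 B tm; elim=> [|j IH] jm.
  by rewrite subn0 mulr0n !mulr0 !mul0r subr0 (mulrC (a t)) subrr normr0.
set E := 18 * (m%:R + 1) * h * G.
have s1 : (1 <= t - j.+1)%N by lia.
have es : (t - j)%N = (t - j.+1).+1 by lia.
have := IH (ltnW jm); rewrite es; have [-> ->] := rec _ s1.
have [/prodle P1 /prodle P2] := W_close rec h0 G0 B tm jm.
have [ha hb] : `|a t| <= G /\ `|b t| <= G by apply: B; lia.
move: (P1 _ _ ha) (P2 _ _ hb) => {P1 P2}.
set Wa := 2 * ext a _ - _.  set Wb := 2 * ext b _ - _.
move=> /absle [q1 q2] /absle [q3 q4] /absle [q5 q6].
have hE1 := ler_wpM2l h0 q2. have hE2 := ler_wpM2l h0 q1.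
have hE3 := ler_wpM2l h0 q4. have hE4 := ler_wpM2l h0 q3.
rewrite /E.
rewrite -natr1; apply/absle; split; nra.
Qed.

Lemma key_alg {R : realType} (a b p q r s h M : R) :
 (a + h * (2 * q - s)) ^+ 2 + (b - h * (2 * p - r)) ^+ 2 - (a ^+ 2 + b ^+ 2)
   - h ^+ 2 * (2 * M - 1) * (a ^+ 2 + b ^+ 2) =
 2 * (2 * h * ((a * q - b * p) - h * M * (a ^+ 2 + b ^+ 2)))
 - 2 * h * ((a * s - b * r) - h * (M + 1) * (a ^+ 2 + b ^+ 2))
 + h ^+ 2 * (((2 * p - r) - a) * ((2 * p - r) + a))
 + h ^+ 2 * (((2 * q - s) - b) * ((2 * q - s) + b)).
Proof. ring. Qed.

Lemma alg4 {R : realType} (x1 x2 x3 x4 c1 c2 c3 c4 : R) : `|x1| <= c1 -> `|x2| <= c2 ->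
  `|x3| <= c3 -> `|x4| <= c4 -> `|2 * x1 - x2 + x3 + x4| <= 2 * c1 + c2 + c3 + c4.
Proof.
move=> /absle [? ?] /absle [? ?] /absle [? ?] /absle [? ?]; apply/absle; split; lra.
Qed.

Lemma key {R : realType} m (h : R) a b t G : srec m h a b -> 0 <= h -> 0 <= G ->
  bnd a b t G -> (2 * m + 3 <= t)%N ->
  `|(a t.+1 ^+ 2 + b t.+1 ^+ 2) - (a t ^+ 2 + b t ^+ 2)
     - h ^+ 2 * (2 * m%:R - 1) * (a t ^+ 2 + b t ^+ 2)|
  <= 216 * (m%:R + 1) ^+ 2 * h ^+ 3 * G ^+ 2.
Proof.
move=> rec h0 G0 B tm.
have t1 : (1 <= t)%N by lia.
have n1 : (0 < t - m)%N by lia.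
have n2 : (0 < t - m.+1)%N by lia.
have [ha hb] : `|a t| <= G /\ `|b t| <= G by apply: B => //.
have [W1 W2] := W_close rec h0 G0 B tm (leq0n m.+1).
rewrite !subn0 in W1 W2.
have X1 := X_close rec h0 G0 B tm (leqnSn m).
have X2 := X_close rec h0 G0 B tm (leqnn m.+1).
have [/absle [e1 e2] /absle [e3 e4]] := ext_bound (r := (t - m)%N) G0 B (leq_subr _ _).
have [/absle [e5 e6] /absle [e7 e8]] := ext_bound (r := (t - m.+1)%N) G0 B (leq_subr _ _).
move: W1 W2 e1 e2 e3 e4 e5 e6 e7 e8.
have [-> ->] := rec _ t1.
rewrite !ext_pos //.
set E := 18 * (m%:R + 1) * h * G.
move=> W1 W2 e1 e2 e3 e4 e5 e6 e7 e8.
have ha' : `|(2 * a (t - m)%N - a (t - m.+1)%N) + a t| <= 4 * G.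
  by apply/absle; move/absle: ha => [? ?]; split; lra.
have hb' : `|(2 * b (t - m)%N - b (t - m.+1)%N) + b t| <= 4 * G.
  by apply/absle; move/absle: hb => [? ?]; split; lra.
have h2 : 0 <= h ^+ 2 by apply: exprn_ge0.
have hh : 0 <= 2 * h by lra.
have P1 : `|h ^+ 2 * (((2 * a (t - m)%N - a (t - m.+1)%N) - a t) * ((2 * a (t - m)%N - a (t - m.+1)%N) + a t))|
   <= h ^+ 2 * (E * (4 * G)).
  by rewrite normrM ger0_norm //; apply: ler_wpM2l => //; apply: prodle.
have P2 : `|h ^+ 2 * (((2 * b (t - m)%N - b (t - m.+1)%N) - b t) * ((2 * b (t - m)%N - b (t - m.+1)%N) + b t))|
   <= h ^+ 2 * (E * (4 * G)).
  by rewrite normrM ger0_norm //; apply: ler_wpM2l => //; apply: prodle.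
have Q1 : `|2 * h * (a t * b (t - m)%N - b t * a (t - m)%N - h * m%:R * (a t ^+ 2 + b t ^+ 2))|
   <= 2 * h * (h * m%:R * (2 * G * E)).
  by rewrite normrM ger0_norm //; apply: ler_wpM2l.
have Q2 : `|2 * h * (a t * b (t - m.+1)%N - b t * a (t - m.+1)%N - h * (m%:R + 1) * (a t ^+ 2 + b t ^+ 2))|
   <= 2 * h * (h * (m%:R + 1) * (2 * G * E)).
  by rewrite normrM ger0_norm //; apply: ler_wpM2l => //; rewrite natr1.
rewrite key_alg; apply: le_trans (alg4 Q1 Q2 P1 P2) _.
rewrite le_eqVlt; apply/orP; left; apply/eqP; rewrite /E; ring.
Qed.

Lemma phase1 {R : realType} m (h : R) a b g P : srec m h a b -> 0 <= h -> 0 <= g ->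
  `|a 1%N| <= g -> `|b 1%N| <= g -> 6 * h * P%:R <= 1 ->
  forall j : nat, (j < P)%N -> forall i : nat, (i <= j)%N ->
  `|a i.+1 - a 1%N| <= 6 * h * i%:R * g /\ `|b i.+1 - b 1%N| <= 6 * h * i%:R * g.
Proof.
move=> rec h0 g0 ha1 hb1 hP; elim=> [|j IH] jP i.
  rewrite leqn0 => /eqP ->; by rewrite !subrr normr0 mulr0n mulr0 mul0r; split.
rewrite leq_eqVlt => /orP [/eqP ->|]; last by rewrite ltnS => ij; apply: IH => //; apply: ltnW.
have jP' : (j < P)%N by apply: ltnW.
have Bj : bnd a b j.+1 (2 * g).
  move=> r r1 rj; have ir : (r.-1 <= j)%N by rewrite -ltnS prednK.
  have := IH jP' _ ir; rewrite prednK //.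
  have hr : h * r.-1%:R <= h * P%:R.
    apply: ler_wpM2l => //; rewrite ler_nat; apply: leq_trans (ltnW jP'); by [].
  move=> [/absle [? ?] /absle [? ?]]; move/absle: ha1 => [? ?]; move/absle: hb1 => [? ?].
  have hg1 : 6 * h * r.-1%:R * g <= g.
    have : 6 * (h * r.-1%:R) <= 1 by lra.
    by move=> H6; nra.
  split; apply/absle; split; lra.
have := step_bound rec h0 (ltac:(lra) : 0 <= 2 * g) Bj (ltn0Sn j).
move=> [/absle [? ?] /absle [? ?]].
have [/absle [? ?] /absle [? ?]] := IH jP' _ (leqnn j).
rewrite -natr1; split; apply/absle; split; lra.
Qed.

Definition Nn {R : realType} (a b : nat -> R) t := a t ^+ 2 + b t ^+ 2.

Lemma sq_abs {R : realType} (x g : R) : 0 <= g -> x ^+ 2 <= g ^+ 2 -> `|x| <= g.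
Proof. move=> g0 H; apply/absle; split; nra. Qed.

Lemma abs_sq {R : realType} (x g : R) : `|x| <= g -> x ^+ 2 <= g ^+ 2.
Proof. move=> /absle [? ?]; nra. Qed.

Lemma p2_arith {R : realType} (h mr Nu Nu1 NP c g Lr tr : R) :
  0 <= h -> h <= 1 -> 0 <= g -> 0 <= c -> 1 <= mr -> 0 <= tr -> tr + 1 <= Lr ->
  2 * c <= NP -> 3456 * (mr + 1) ^+ 2 * h * g ^+ 2 <= c ->
  h ^+ 2 * Lr * (4000 * (mr + 1) ^+ 2 * g ^+ 2) <= 8 * g ^+ 2 -> NP <= 8 * g ^+ 2 ->
  NP + tr * h ^+ 2 * c <= Nu -> 0 <= Nu -> Nu <= 32 * g ^+ 2 ->
  `|Nu1 - Nu - h ^+ 2 * (2 * mr - 1) * Nu| <= 216 * (mr + 1) ^+ 2 * h ^+ 3 * (4 * g) ^+ 2 ->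
  Nu <= NP + tr * h ^+ 2 * (4000 * (mr + 1) ^+ 2 * g ^+ 2) ->
  [/\ NP + (tr + 1) * h ^+ 2 * c <= Nu1,
      Nu1 <= NP + (tr + 1) * h ^+ 2 * (4000 * (mr + 1) ^+ 2 * g ^+ 2) &
      Nu1 <= 16 * g ^+ 2].
Proof.
move=> h0 h1 g0 c0 m1 tr0 tL NPc hc hL NP8 lo Nu0 Nu32 /absle [K1 K2] up.
have h2 : 0 <= h ^+ 2 by apply: sqr_ge0.
have g2 : 0 <= g ^+ 2 by apply: sqr_ge0.
have M0 : 1 <= (mr + 1) ^+ 2 by move: m1; clear; nra.
move: K1 K2 hc hL up lo.
have A1 : 2 * mr - 1 <= 2 * (mr + 1) ^+ 2 by move: m1; clear; nra.
move: M0 A1.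
set M := (mr + 1) ^+ 2 => M0 A1 K1 K2 hc hL up lo.
clearbody M.
have F1 : h ^+ 2 * Nu <= h ^+ 2 * ((2 * mr - 1) * Nu).
  by apply: ler_wpM2l => //; move: m1 Nu0; clear; nra.
have F2 : h ^+ 2 * ((2 * mr - 1) * Nu) <= h ^+ 2 * (64 * M * g ^+ 2).
  apply: ler_wpM2l => //.
  have A2 : (2 * mr - 1) * Nu <= (2 * M) * Nu by apply: ler_wpM2r => //.
  have A3 : (2 * M) * Nu <= (2 * M) * (32 * g ^+ 2) by apply: ler_wpM2l; [move: M0; clear; lra | exact: Nu32].
  by move: A2 A3; clear; lra.
have Mg : 0 <= M * g ^+ 2 by apply: mulr_ge0 => //; move: M0; clear; lra.
have F3 : h * h ^+ 2 * (M * g ^+ 2) <= h ^+ 2 * (M * g ^+ 2).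
  apply: ler_wpM2r => //; rewrite -[X in _ <= X]mul1r; by apply: ler_wpM2r.
have F4 : h ^+ 2 * (3456 * M * h * g ^+ 2) <= h ^+ 2 * (Nu - c).
  have trc : 0 <= tr * h ^+ 2 * c by apply: mulr_ge0 => //; apply: mulr_ge0.
  by apply: ler_wpM2l => //; move: hc lo NPc trc; clear; lra.
have F5 : h ^+ 2 * ((tr + 1) * (4000 * M * g ^+ 2)) <= h ^+ 2 * (Lr * (4000 * M * g ^+ 2)).
  apply: ler_wpM2l => //; apply: ler_wpM2r => //; move: Mg; clear; lra.
have E3 : h ^+ 3 = h * h ^+ 2 by rewrite exprS.
have E2 : (4 * g) ^+ 2 = 16 * g ^+ 2 by rewrite exprMn; congr (_ * _); rewrite expr2; clear; lra.
have hMg : 0 <= h ^+ 2 * (M * g ^+ 2) by apply: mulr_ge0.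
rewrite E2 E3 in K1 K2.
split.
- by move: K1 F1 F4 lo; clear; lra.
- by move: K2 F2 F3 up hMg; clear; lra.
- by move: K2 F2 F3 up F5 hL NP8 hMg; clear; lra.
Qed.

Lemma phase2 {R : realType} m (h : R) a b g c L : srec m h a b -> (1 <= m)%N ->
  0 <= h -> h <= 1 -> 0 <= g -> 0 <= c ->
  bnd a b (2 * m + 3) (2 * g) -> 2 * c <= Nn a b (2 * m + 3)%N ->
  3456 * (m%:R + 1) ^+ 2 * h * g ^+ 2 <= c ->
  h ^+ 2 * L%:R * (4000 * (m%:R + 1) ^+ 2 * g ^+ 2) <= 8 * g ^+ 2 ->
  forall t : nat, (t <= L)%N ->
    [/\ bnd a b (2 * m + 3 + t) (4 * g),
        Nn a b (2 * m + 3)%N + t%:R * h ^+ 2 * c <= Nn a b (2 * m + 3 + t)%N &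
        Nn a b (2 * m + 3 + t)%N <= Nn a b (2 * m + 3)%N + t%:R * h ^+ 2 * (4000 * (m%:R + 1) ^+ 2 * g ^+ 2)].
Proof.
move=> rec m1 h0 h1 g0 c0 BP NPc hc hL.
have P1 : (1 <= 2 * m + 3)%N by rewrite addn_gt0 orbT.
have NP8 : Nn a b (2 * m + 3)%N <= 8 * g ^+ 2.
  have [/abs_sq u /abs_sq v] := BP (2 * m + 3)%N P1 (leqnn _).
  rewrite /Nn; move: u v; rewrite !exprMn; clear; lra.
have m1R : 1 <= m%:R :> R by rewrite ler1n.
elim=> [|t IH] tL.
  rewrite addn0 mulr0n !mul0r addr0; split => //.
  by move=> r r1 rP; have [/absle [q1 q2] /absle [q3 q4]] := BP r r1 rP; split; apply/absle; split; clear -g0 q1 q2 q3 q4; lra.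
have tL' : (t <= L)%N by apply: ltnW.
have tge : (2 * m + 3 <= 2 * m + 3 + t)%N by apply: leq_addr.
have u1 : (0 < 2 * m + 3 + t)%N by rewrite !addn_gt0 orbT.
have eS : (2 * m + 3 + t.+1 = (2 * m + 3 + t).+1)%N by rewrite addnS.
have tLR : t%:R + 1 <= L%:R :> R by rewrite natr1 ler_nat.
have [B lo up] := IH tL'.
rewrite eS.
move: lo up; set u := (2 * m + 3 + t)%N => lo up.
have g40 : 0 <= 4 * g by clear -g0; lra.
have K := key rec h0 g40 B tge.
move: K; rewrite -/(Nn a b u) -/(Nn a b u.+1) => K.
have [/abs_sq au /abs_sq bu] := B u u1 (leqnn u).
have Nu0 : 0 <= Nn a b u by rewrite /Nn; apply: addr_ge0; apply: sqr_ge0.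
have Nu32 : Nn a b u <= 32 * g ^+ 2 by rewrite /Nn; move: au bu; rewrite !exprMn; clear; lra.
have [lo' up' NS] := p2_arith h0 h1 g0 c0 m1R (ler0n _ t) tLR NPc hc hL NP8 lo Nu0 Nu32 K up.
rewrite -[t.+1%:R]natr1; split => //.
move=> r r1; rewrite leq_eqVlt => /orP [/eqP ->|]; last by rewrite ltnS; exact: B r r1.
have e16 : 16 * g ^+ 2 = (4 * g) ^+ 2 by rewrite exprMn; congr (_ * _); rewrite expr2; clear; lra.
have aS : a u.+1 ^+ 2 <= (4 * g) ^+ 2.
  rewrite -e16; move: NS; rewrite /Nn; have := sqr_ge0 (b u.+1); clear; lra.
have bS : b u.+1 ^+ 2 <= (4 * g) ^+ 2.
  rewrite -e16; move: NS; rewrite /Nn; have := sqr_ge0 (a u.+1); clear; lra.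
by split; apply: sq_abs.
Qed.

Lemma srecr {R : realType} (F : nat -> R) T :
  \sum_(1 <= t < T.+2) F t = \sum_(1 <= t < T.+1) F t + F T.+1.
Proof. by rewrite big_nat_recr. Qed.

Lemma sumF {R : realType} m (h : R) a b : srec m h a b -> forall T : nat,
  a T.+1 - a 1%N = h * \sum_(1 <= t < T.+1) (2 * ext b (t - m) - ext b (t - m.+1)) /\
  b T.+1 - b 1%N = - h * \sum_(1 <= t < T.+1) (2 * ext a (t - m) - ext a (t - m.+1)).
Proof.
move=> rec; elim=> [|T [IHa IHb]].
  by rewrite !big_geq // !subrr !mulr0.
have [ea eb] := rec T.+1 (ltn0Sn T).
rewrite !srecr /= ea eb.
split; [rewrite (mulrDr h (\sum_(1 <= t < T.+1) _)) -IHa| rewrite (mulrDr (- h) (\sum_(1 <= t < T.+1) _)) -IHb]; ring.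
Qed.

Lemma sumFG {R : realType} m (b : nat -> R) : forall T : nat,
  \sum_(1 <= t < T.+1) ext b (t - m.+1) + ext b (T - m) = \sum_(1 <= t < T.+1) ext b (t - m).
Proof.
elim=> [|T IH]; first by rewrite !big_geq // sub0n /= addr0.
rewrite !srecr /= subSS -IH; ring.
Qed.

Lemma sumFS {R : realType} m' (b : nat -> R) : forall T : nat,
  \sum_(1 <= t < T.+1) b t = \sum_(1 <= t < T.+1) ext b (t - m'.+1) + \sum_(i < m'.+1) ext b (T - i).
Proof.
elim=> [|T IH].
  rewrite !big_geq // add0r big1 // => i _; by rewrite sub0n.
rewrite !srecr /= IH.
rewrite [\sum_(i < m'.+1) ext b (T.+1 - i)]big_ord_recl [\sum_(i < m'.+1) ext b (T - i)]big_ord_recr /=.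
rewrite subn0 subSS.
have E : forall i : 'I_m', ext b (T.+1 - bump 0 i) = ext b (T - i).
  by move=> i; rewrite /bump /= add1n subSS.
rewrite (eq_bigr _ (fun i _ => E i)).
ring.
Qed.

Lemma Qbound {R : realType} m (b : nat -> R) (a : nat -> R) T G : 0 <= G -> bnd a b T G ->
  `|\sum_(i < m) ext b (T - i)| <= m%:R * G /\ `|\sum_(i < m) ext a (T - i)| <= m%:R * G.
Proof.
move=> G0 B.
have H1 : forall i : 'I_m, `|ext a (T - i)| <= G /\ `|ext b (T - i)| <= G.
  by move=> i; exact: ext_bound G0 B (leq_subr _ _).
split; (apply: le_trans; first exact: ler_norm_sum);
  (apply: le_trans; first (apply: ler_sum => i _; exact: (proj2 (H1 i)) || exact: (proj1 (H1 i))));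
  by rewrite sumr_const card_ord mulr_natl.
Qed.

Lemma sum_bound {R : realType} m (h : R) a b T G : srec m h a b -> (1 <= m)%N -> 0 <= h -> 0 <= G ->
  bnd a b T G ->
  `|a T.+1 - a 1%N| <= h * (`|\sum_(1 <= t < T.+1) b t| + (m%:R + 1) * G) /\
  `|b T.+1 - b 1%N| <= h * (`|\sum_(1 <= t < T.+1) a t| + (m%:R + 1) * G).
Proof.
move=> rec; case: m rec => [//|m'] rec _ h0 G0 B.
have [ea eb] := sumF rec T.
have [qb qa] := Qbound m'.+1 G0 B.
have [e1 e2] := ext_bound (r := (T - m'.+1)%N) G0 B (leq_subr _ _).
rewrite ea eb !sumrB -!mulr_sumr.
rewrite -(sumFG m'.+1 b T) -(sumFG m'.+1 a T).
rewrite (sumFS m' b T) (sumFS m' a T).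
set Fb := \sum_(1 <= t < T.+1) ext b (t - m'.+1).
set Fa := \sum_(1 <= t < T.+1) ext a (t - m'.+1).
set Gb := \sum_(1 <= t < T.+1) ext b (t - m'.+2).
set Ga := \sum_(1 <= t < T.+1) ext a (t - m'.+2).
set Qb := \sum_(i < m'.+1) ext b (T - i).
set Qa := \sum_(i < m'.+1) ext a (T - i).
move: qb qa e1 e2; rewrite -/Qb -/Qa.
set eB := ext b (T - m'.+1); set eA := ext a (T - m'.+1).
move=> /absle [q1 q2] /absle [q3 q4] /absle [q5 q6] /absle [q7 q8].
have FGb := sumFG m'.+1 b T. have FGa := sumFG m'.+1 a T.
rewrite -/Fb -/Gb -/eB in FGb. rewrite -/Fa -/Ga -/eA in FGa.
have tri : forall x y z : R, `|x - y + z| <= `|x| + `|y| + `|z|.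
  move=> x y z; apply: le_trans (ler_normD _ _) _; rewrite lerD2r.
  by apply: le_trans (ler_normD _ _) _; rewrite normrN.
have tri2 : forall x y z c : R, `|y| <= m'.+1%:R * G -> `|z| <= G -> `|x - y + z| <= `|x| + (m'.+1%:R + 1) * G.
  move=> x y z c hy hz; apply: le_trans (tri x y z) _.
  have -> : `|x| + (m'.+1%:R + 1) * G = `|x| + m'.+1%:R * G + G by ring.
  by apply: lerD => //; apply: lerD.
have eqb : 2 * (Gb + eB) - Gb = (Fb + Qb) - Qb + eB by rewrite -FGb; ring.
have eqa : 2 * (Ga + eA) - Ga = (Fa + Qa) - Qa + eA by rewrite -FGa; ring.
rewrite eqb eqa !normrM (ger0_norm h0) normrN (ger0_norm h0).
split; apply: ler_wpM2l => //; apply: tri2 => //; apply/absle; split => //.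
Qed.

Lemma sq_lower {R : realType} (x y e g : R) : `|x - y| <= e -> `|y| <= g -> e <= g -> y ^+ 2 - 3 * e * g <= x ^+ 2.
Proof.
move=> /absle [h1 h2] /absle [h3 h4] eg.
have e0 : 0 <= e by lra.
nra.
Qed.

Lemma diff_sq {R : realType} (x y g d : R) : `|x| <= 4 * g -> `|y| <= g -> `|x - y| <= d ->
  x ^+ 2 - y ^+ 2 <= 5 * g * d.
Proof.
move=> hx hy hd.
have -> : x ^+ 2 - y ^+ 2 = (x - y) * (x + y) by ring.
apply: le_trans (ler_norm _) _; rewrite normrM mulrC.
apply: ler_pM => //.
apply: le_trans (ler_normD _ _) _; move: hx hy; clear; move=> *; lra.
Qed.

Lemma fixedT {R : realType} m (h : R) a b T a1 b1 g N1 : srec m h a b -> (1 <= m)%N -> 0 <= h ->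
  a 1%N = a1 -> b 1%N = b1 -> g = `|a1| + `|b1| -> N1 = a1 ^+ 2 + b1 ^+ 2 ->
  h <= 1 -> 6 * h * (2 * m + 3)%N%:R <= 1 -> 36 * h * (2 * m + 3)%N%:R * g ^+ 2 <= N1 / 2 ->
  3456 * (m%:R + 1) ^+ 2 * h * g ^+ 2 <= N1 / 4 ->
  h ^+ 2 * T%:R * (4000 * (m%:R + 1) ^+ 2 * g ^+ 2) <= 8 * g ^+ 2 ->
  (2 * m + 3 <= T.+1)%N ->
  (T.+1 - (2 * m + 3))%N%:R * h ^+ 2 * (N1 / 4) - 36 * h * (2 * m + 3)%N%:R * g ^+ 2
   <= 5 * g * (h * (`|\sum_(1 <= t < T.+1) a t| + `|\sum_(1 <= t < T.+1) b t| + 8 * (m%:R + 1) * g)).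
Proof.
move=> rec m1 h0 ea1 eb1 eg eN h1 c1 c2 c3 hT PT.
set P := (2 * m + 3)%N in c1 c2 *.
have g0 : 0 <= g by rewrite eg; apply: addr_ge0.
have ha : `|a 1%N| <= g by rewrite ea1 eg lerDl.
have hb : `|b 1%N| <= g by rewrite eb1 eg lerDr.
have ph := phase1 rec h0 g0 ha hb c1.
have P1 : (2 * m + 2 < P)%N by rewrite /P ltn_add2l.
have hPi : forall i : nat, (i <= 2 * m + 2)%N -> 6 * h * i%:R * g <= g.
  move=> i iP.
  have : i%:R <= P%:R :> R by rewrite ler_nat; apply: leq_trans iP (ltnW P1).
  move: c1 h0 g0; clear => c1 h0 g0 iP.
  have : 6 * h * i%:R <= 1 by apply: le_trans c1; apply: ler_wpM2l => //; lra.
  move=> H; nra.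
have BP : bnd a b P (2 * g).
  move=> r r1 rP.
  have ir : (r.-1 <= 2 * m + 2)%N by rewrite -ltnS prednK //; move: rP; rewrite /P addnS.
  have := ph _ P1 _ ir; rewrite prednK //.
  move=> [/absle [q1 q2] /absle [q3 q4]]; move/absle: ha => [q5 q6]; move/absle: hb => [q7 q8].
  have q9 := hPi _ ir.
  by split; apply/absle; split; move: q1 q2 q3 q4 q5 q6 q7 q8 q9; clear; move=> *; lra.
have [aP bP] := ph _ P1 _ (leqnn _).
have eP : (2 * m + 2).+1 = P by rewrite /P -addnS.
rewrite eP in aP bP.
have NP : N1 - 36 * h * P%:R * g ^+ 2 <= Nn a b P.
  have eb := hPi _ (leqnn _).
  have sa := sq_lower aP ha eb. have sb := sq_lower bP hb eb.
  have hP : (2 * m + 2)%N%:R <= P%:R :> R by rewrite ler_nat; apply: ltnW.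
  have hh : 18 * h * g ^+ 2 * (2 * m + 2)%N%:R <= 18 * h * g ^+ 2 * P%:R.
    by apply: ler_wpM2l => //; apply: mulr_ge0; [lra|apply: sqr_ge0].
  move: sa sb hh; rewrite /Nn eN -ea1 -eb1.
  by clear; move=> *; lra.
have N10 : 0 <= N1 by rewrite eN; apply: addr_ge0; apply: sqr_ge0.
have c0 : 0 <= N1 / 4 by move: N10; clear; lra.
have NPc : 2 * (N1 / 4) <= Nn a b (2 * m + 3)%N by move: NP c2; clear; lra.
have LT : ((T.+1 - P)%N%:R <= T%:R :> R) by rewrite ler_nat /P; clear -PT; lia.
have hL : h ^+ 2 * (T.+1 - P)%N%:R * (4000 * (m%:R + 1) ^+ 2 * g ^+ 2) <= 8 * g ^+ 2.
  apply: le_trans hT; apply: ler_wpM2r.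
    apply: mulr_ge0; [apply: mulr_ge0; [lra|apply: sqr_ge0]|apply: sqr_ge0].
  by apply: ler_wpM2l => //; apply: sqr_ge0.
have [B2 lo _] := phase2 rec m1 h0 h1 g0 c0 BP NPc c3 hL (leqnn _).
have eT : (2 * m + 3 + (T.+1 - P))%N = T.+1 by rewrite /P; clear -PT; lia.
rewrite eT in B2 lo.
have g40 : 0 <= 4 * g by move: g0; clear; lra.
have BT := bnd_le (leqnSn T) B2.
have [sa sb] := sum_bound rec m1 h0 g40 BT.
have [aT bT] := B2 T.+1 (ltn0Sn T) (leqnn _).
have da := diff_sq aT ha sa. have db := diff_sq bT hb sb.
move: lo NP da db; rewrite /Nn eN -ea1 -eb1.
by clear; move=> *; lra.
Qed.

Lemma final_arith {R : realType} (k g N1 s h Lh S m1r Pr : R) :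
  0 < k -> 0 < g -> 0 < N1 -> 0 < s -> h * s = 2 * k ->
  288 * Pr * g ^+ 2 <= s * (k * N1) -> 640 * m1r * g ^+ 2 <= s * (k * N1) ->
  2 * k ^+ 2 <= Lh ->
  Lh * (N1 / 4) - 36 * h * Pr * g ^+ 2 <= 5 * g * (h * (S + 8 * m1r * g)) ->
  k * N1 / (80 * g) * s <= S.
Proof.
move=> k0 g0 N0 s0 hs H1 H2 HL F.
have hA : 36 * h * Pr * g ^+ 2 * s = 72 * k * Pr * g ^+ 2.
  have -> : 36 * h * Pr * g ^+ 2 * s = 36 * (h * s) * Pr * g ^+ 2 by ring.
  by rewrite hs; ring.
have k4 : 0 <= k / 4 by apply: divr_ge0; lra.
have a1 : 36 * h * Pr * g ^+ 2 <= k ^+ 2 * N1 / 4.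
  rewrite -(ler_pM2r s0) hA.
  have := ler_wpM2l k4 H1; move: k0; clear => k0 H.
  have -> : k ^+ 2 * N1 / 4 * s = k / 4 * (s * (k * N1)) by ring.
  have e : k / 4 * (288 * Pr * g ^+ 2) = 72 * k * Pr * g ^+ 2 by clear; lra.
  by rewrite e in H.
have a2 : Lh * (N1 / 4) >= 2 * k ^+ 2 * (N1 / 4) by apply: ler_wpM2r => //; lra.
have a3 : k ^+ 2 * N1 / 4 <= 5 * g * (h * (S + 8 * m1r * g)) by move: a1 a2 F; clear; move=> *; lra.
have a4 : k * N1 * s / 4 <= 10 * g * (S + 8 * m1r * g).
  rewrite -(ler_pM2l k0).
  have H := a3; rewrite -(ler_pM2r s0) in H.
  have e1 : 5 * g * (h * (S + 8 * m1r * g)) * s = 5 * g * (h * s) * (S + 8 * m1r * g) by ring.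
  rewrite e1 hs in H.
  have -> : k * (k * N1 * s / 4) = k ^+ 2 * N1 / 4 * s by ring.
  have e : 5 * g * (2 * k) * (S + 8 * m1r * g) = k * (10 * g * (S + 8 * m1r * g)) by ring.
  by rewrite e in H.
have a5 : 10 * g * S * 8 >= k * N1 * s.
  by move: a4 H2; clear; move=> *; lra.
rewrite mulrAC ler_pdivrMr; last by lra.
by move: a5; clear; move=> *; lra.
Qed.

Lemma sq_le_sq {R : realType} (x y : R) : 0 <= x -> 0 <= y -> x ^+ 2 <= y ^+ 2 -> x <= y.
Proof. move=> x0 y0 H; nra. Qed.

Lemma scal {R : realType} m (a1 b1 : R) : (1 <= m)%N -> 0 < a1 ^+ 2 + b1 ^+ 2 ->
  exists k0 : R, 0 < k0 /\ forall k : R, 0 < k -> k <= k0 ->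
  exists C : R, 0 < C /\ exists T0 : nat, forall T : nat, (T0 <= T)%N ->
  forall a b : nat -> R, srec m (2 * (k / Num.sqrt T%:R)) a b -> a 1%N = a1 -> b 1%N = b1 ->
  C * Num.sqrt T%:R <= `|\sum_(1 <= t < T.+1) a t| + `|\sum_(1 <= t < T.+1) b t|.
Proof.
move=> m1 N0.
set N1 := a1 ^+ 2 + b1 ^+ 2 in N0 *.
set g := `|a1| + `|b1|.
have g0' : 0 <= g by apply: addr_ge0.
have Ng : N1 <= g ^+ 2.
  rewrite /N1 /g -(real_normK (num_real a1)) -(real_normK (num_real b1)).
  have := normr_ge0 a1; have := normr_ge0 b1; clear; move=> *; nra.
have g0 : 0 < g by move: g0' Ng N0; clear; move=> *; nra.
have g2 : 0 < g ^+ 2 by apply: exprn_gt0.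
pose M : R := (m%:R + 1) ^+ 2.
have M1 : 1 <= M by rewrite /M; have := ler0n R m; clear; move=> *; nra.
pose Pr : R := (2 * m + 3)%N%:R.
have Pr0 : 0 < Pr by rewrite /Pr ltr0n addn_gt0 orbT.
pose hs : R := Num.min 1 (Num.min (1 / (6 * Pr)) (Num.min (N1 / (72 * Pr * g ^+ 2)) (N1 / (4 * 3456 * M * g ^+ 2)))).
have hs0 : 0 < hs.
  have p1 : 0 < 6 * Pr by move: Pr0; clear; lra.
  have p2 : 0 < 72 * Pr * g ^+ 2 by apply: mulr_gt0 => //; move: Pr0; clear; lra.
  have p3 : 0 < 4 * 3456 * M * g ^+ 2 by apply: mulr_gt0 => //; move: M1; clear; lra.
  rewrite /hs !lt_min ltr01 /=; apply/and3P; split; apply: divr_gt0 => //.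
exists (Num.min (hs / 2) (1 / (2000 * M))); split.
  rewrite lt_min; apply/andP; split; apply: divr_gt0; lra.
move=> k k0 /[dup] kk0; rewrite le_min => /andP [kh kM].
pose C : R := k * N1 / (80 * g).
have C0 : 0 < C by rewrite /C; apply: divr_gt0; [apply: mulr_gt0|]; lra.
exists C; split => //.
pose X1 : R := 288 * Pr * g ^+ 2 / (k * N1).
pose X2 : R := 640 * (m%:R + 1) * g ^+ 2 / (k * N1).
have kN : 0 < k * N1 by apply: mulr_gt0.
have X10 : 0 <= X1 by rewrite /X1; apply: divr_ge0; [|lra]; apply: mulr_ge0; lra.
have X20 : 0 <= X2 by rewrite /X2; apply: divr_ge0; [|lra]; apply: mulr_ge0; [apply: mulr_ge0|]; have := ler0n R m; lra.
exists (maxn (2 * (2 * m + 3)) (maxn (Num.Def.archi_bound (X1 ^+ 2)) (Num.Def.archi_bound (X2 ^+ 2)))).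
move=> T; rewrite !geq_max => /and3P [TP T1 T2] a b rec ea eb.
have T1n : (1 <= T)%N by move: TP; clear; lia.
have PT : (2 * m + 3 <= T.+1)%N by move: TP; clear; lia.
have L2 : (T <= 2 * (T.+1 - (2 * m + 3)))%N by move: TP; clear; lia.
have TR : 1 <= T%:R :> R by rewrite ler1n.
pose s : R := Num.sqrt T%:R.
have s2 : s ^+ 2 = T%:R by rewrite /s sqr_sqrtr // ler0n.
have s0 : 0 <= s by rewrite /s sqrtr_ge0.
have s1 : 1 <= s by apply: sq_le_sq => //; rewrite s2 expr1n.
have sp : 0 < s by move: s1; clear; lra.
have Xs : forall X : R, 0 <= X -> (Num.Def.archi_bound (X ^+ 2) <= T)%N -> X <= s.
  move=> X X0 XT; apply: sq_le_sq => //; rewrite s2.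
  apply: le_trans (ltW (archi_boundP (sqr_ge0 X))) _; by rewrite ler_nat.
have kN0 : k * N1 != 0 by move: kN; clear; move=> *; lra.
have H1 : 288 * Pr * g ^+ 2 <= s * (k * N1).
  have := ler_wpM2r (ltW kN) (Xs _ X10 T1); rewrite /X1 divfK //.
have H2 : 640 * (m%:R + 1) * g ^+ 2 <= s * (k * N1).
  have := ler_wpM2r (ltW kN) (Xs _ X20 T2); rewrite /X2 divfK //.
pose h : R := 2 * (k / s).
have hs_eq : h * s = 2 * k by rewrite /h -mulrA divfK //; move: sp; clear; move=> *; lra.
have hrw : 2 * (k / Num.sqrt T%:R) = h by [].
rewrite hrw in rec.
have h0 : 0 <= h by rewrite /h; apply: mulr_ge0; [lra|apply: divr_ge0; lra].
have h2k : h <= 2 * k.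
  rewrite /h ler_pM2l; last by lra.
  by rewrite ler_pdivrMr //; apply: ler_peMr; lra.
have hhs : h <= hs by move: h2k kh; clear; move=> *; lra.
move: hhs; rewrite /hs !le_min => /and4P [c0 c1 c2 c3].
rewrite ler_pdivlMr in c1; last by move: Pr0; clear; lra.
rewrite ler_pdivlMr in c2; last by apply: mulr_gt0 => //; move: Pr0; clear; lra.
rewrite ler_pdivlMr in c3; last by apply: mulr_gt0 => //; move: M1; clear; lra.
rewrite ler_pdivlMr in kM; last by move: M1; clear; lra.
have c1' : 6 * h * Pr <= 1 by move: c1; clear; move=> *; lra.
have c2' : 36 * h * Pr * g ^+ 2 <= N1 / 2 by move: c2; clear; move=> *; lra.
have c3' : 3456 * M * h * g ^+ 2 <= N1 / 4 by move: c3; clear; move=> *; lra.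
have hT2 : h ^+ 2 * T%:R = 4 * k ^+ 2.
  by rewrite -s2 -exprMn hs_eq exprMn; congr (_ * _); rewrite expr2; clear; lra.
have k1 : k <= 1 by move: kM M1 k0; clear; move=> *; nra.
have hT : h ^+ 2 * T%:R * (4000 * M * g ^+ 2) <= 8 * g ^+ 2.
  rewrite hT2.
  have kk : k ^+ 2 * (2000 * M) <= 1.
    have := ler_wpM2l (ltW k0) kM; move: k1; clear; rewrite expr2; move=> *; lra.
  have := ler_wpM2r (ltW g2) kk; clear; move=> *; lra.
have Lh : 2 * k ^+ 2 <= (T.+1 - (2 * m + 3))%N%:R * h ^+ 2.
  have : T%:R <= 2 * (T.+1 - (2 * m + 3))%N%:R :> R by rewrite -natrM ler_nat.
  move=> HH; have := ler_wpM2r (sqr_ge0 h) HH; rewrite mulrC hT2.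
  by clear; move=> *; lra.
have F := fixedT rec m1 h0 ea eb erefl erefl c0 c1' c2' c3' hT PT.
exact: final_arith k0 g0 N0 sp hs_eq H1 H2 Lh F.
Qed.

Lemma I2_0 : (ord0 : 'I_2) = 0. Proof. by apply: val_inj. Qed.
Lemma I2_1 : (lift ord0 ord0 : 'I_2) = 1. Proof. by apply: val_inj. Qed.

Lemma dot_expand {R : realType} (u v : 'cV[R]_2) : dot u v = u 0 0 * v 0 0 + u 1 0 * v 1 0.
Proof. by rewrite /dot !big_ord_recl big_ord0 addr0 I2_0 I2_1. Qed.

Lemma mpc0 {R : realType} : (mp_c : 'cV[R]_2) 0 0 = 1. Proof. by rewrite /mp_c mxE. Qed.
Lemma mpc1 {R : realType} : (mp_c : 'cV[R]_2) 1 0 = -1. Proof. by rewrite /mp_c mxE. Qed.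

Lemma mpA_entry {R : realType} (x : 'cV[R]_2) i : (mp_A *m x) i 0 = mp_c i 0 * dot x mp_c.
Proof.
rewrite /mp_A -mulmxA mxE big_ord_recl big_ord0 addr0.
have -> : (ord0 : 'I_1) = 0 by apply: val_inj.
congr (_ * _).
rewrite mxE dot_expand !big_ord_recl big_ord0 addr0 I2_0 I2_1 !mxE /=; ring.
Qed.

Lemma mpAT_entry {R : realType} (x : 'cV[R]_2) i : (mp_A^T *m x) i 0 = mp_c i 0 * dot x mp_c.
Proof. by rewrite /mp_A trmx_mul trmxK mpA_entry. Qed.

Lemma dotC {R : realType} (u v : 'cV[R]_2) : dot u v = dot v u.
Proof. by rewrite !dot_expand; ring. Qed.

Lemma dot_A {R : realType} (v x : 'cV[R]_2) : dot v (mp_A *m x) = dot v mp_c * dot x mp_c.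
Proof. by rewrite dot_expand !mpA_entry !dot_expand !mpc0 !mpc1; ring. Qed.

Lemma dot_AT {R : realType} (v x : 'cV[R]_2) : dot v (mp_A^T *m x) = dot v mp_c * dot x mp_c.
Proof. by rewrite dot_expand !mpAT_entry !dot_expand !mpc0 !mpc1; ring. Qed.

Lemma dotDl {R : realType} (u v w : 'cV[R]_2) : dot (u + v) w = dot u w + dot v w.
Proof. by rewrite !dot_expand !mxE; ring. Qed.
Lemma dotBl {R : realType} (u v w : 'cV[R]_2) : dot (u - v) w = dot u w - dot v w.
Proof. by rewrite !dot_expand !mxE; ring. Qed.
Lemma dotZl {R : realType} (c : R) (u w : 'cV[R]_2) : dot (c *: u) w = c * dot u w.
Proof. by rewrite !dot_expand !mxE; ring. Qed.
Lemma dotNr {R : realType} (u w : 'cV[R]_2) : dot u (- w) = - dot u w.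
Proof. by rewrite !dot_expand !mxE; ring. Qed.
Lemma dot0l {R : realType} (w : 'cV[R]_2) : dot 0 w = 0.
Proof. by rewrite !dot_expand !mxE; ring. Qed.
Lemma dotcc {R : realType} : dot (mp_c : 'cV[R]_2) mp_c = 2.
Proof. by rewrite dot_expand mpc0 mpc1; ring. Qed.

Lemma l1_expand {R : realType} (u : 'cV[R]_2) : l1 u = `|u 0 0| + `|u 1 0|.
Proof. by rewrite /l1 !big_ord_recl big_ord0 addr0 I2_0 I2_1. Qed.

Lemma dotc_le {R : realType} (y : 'cV[R]_2) : `|dot y mp_c| <= l1 y.
Proof.
rewrite dot_expand l1_expand mpc0 mpc1 !mulr1 mulrN1.
by apply: le_trans (ler_normD _ _) _; rewrite normrN.
Qed.

Definition vec0 {R : realType} (r : R) : 'cV[R]_2 := \col_(i < 2) (if i == 0 :> nat then r else 0).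
Lemma vec0_dot {R : realType} (r : R) : dot (vec0 r) mp_c = r.
Proof. by rewrite dot_expand mpc0 mpc1 !mxE /=; ring. Qed.
Lemma vec0_l1 {R : realType} (r : R) : l1 (vec0 r) = `|r|.
Proof. by rewrite l1_expand !mxE /= normr0 addr0. Qed.

Lemma util1_dot {R : realType} (x2 : nat -> 'cV[R]_2) s :
  dot (util1 x2 s) mp_c = 2 * ext (fun t => dot (x2 t) mp_c) s.
Proof. case: s => [|s] /=; first by rewrite dot0l mulr0. by rewrite dotC dot_A dotcc. Qed.

Lemma util2_dot {R : realType} (x1 : nat -> 'cV[R]_2) s :
  dot (util2 x1 s) mp_c = - (2 * ext (fun t => dot (x1 t) mp_c) s).
Proof. case: s => [|s] /=; first by rewrite dot0l mulr0 oppr0. by rewrite dotC dotNr dot_AT dotcc. Qed.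

Lemma traj_srec {R : realType} m (eta : R) y1 y2 x1 x2 : oftrl_traj m 1 eta y1 y2 x1 x2 ->
  srec m (2 * eta) (fun t => dot (x1 t) mp_c) (fun t => dot (x2 t) mp_c).
Proof.
move=> [_ _ H] t t1; have [e1 e2] := H t t1.
rewrite e1 e2 !dotDl !dotZl !dotBl !util1_dot !util2_dot.
split; ring.
Qed.

Lemma radius_ge0 {R : realType} T (x : nat -> 'cV[R]_2) : 0 <= radius T x.
Proof.
rewrite /radius; apply: mulr_ge0; first by rewrite invr_ge0 ler0n.
by apply: sumr_ge0 => i _; rewrite l1_expand; apply: addr_ge0.
Qed.

Lemma value_eq {R : realType} T (x1 x2 : nat -> 'cV[R]_2) (y1 y2 : 'cV[R]_2) :
  \sum_(1 <= t < T.+1) (dot (y1 - x1 t) (util1 x2 t) + dot (y2 - x2 t) (util2 x1 t)) =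
  dot y1 mp_c * \sum_(1 <= t < T.+1) dot (x2 t) mp_c - dot y2 mp_c * \sum_(1 <= t < T.+1) dot (x1 t) mp_c.
Proof.
rewrite !mulr_sumr -sumrB; apply: eq_big_nat => t /andP [t1 _].
case: t t1 => [//|t] _ /=.
rewrite dot_A dotNr dot_AT !dotBl; ring.
Qed.

Lemma regret_lb {R : realType} T (x1 x2 : nat -> 'cV[R]_2) :
  Dsize T x1 x2 * (`|\sum_(1 <= t < T.+1) dot (x1 t) mp_c| + `|\sum_(1 <= t < T.+1) dot (x2 t) mp_c|)
  <= RegTot T x1 x2.
Proof.
set Sa := \sum_(1 <= t < T.+1) dot (x1 t) mp_c.
set Sb := \sum_(1 <= t < T.+1) dot (x2 t) mp_c.
set r1 := radius T x1. set r2 := radius T x2.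
have r10 : 0 <= r1 by apply: radius_ge0.
have r20 : 0 <= r2 by apply: radius_ge0.
rewrite /RegTot; set E := [set r : R | _]%classic.
have ubE : has_ubound E.
  exists (r1 * `|Sb| + r2 * `|Sa|) => z [y1 [y2 [l1y1 l1y2 ->]]].
  rewrite value_eq -/Sa -/Sb.
  have d1 : dot y1 mp_c * Sb <= r1 * `|Sb|.
    apply: le_trans (ler_norm _) _; rewrite normrM; apply: ler_wpM2r => //.
    by apply: le_trans (dotc_le y1) l1y1.
  have d2 : - (dot y2 mp_c * Sa) <= r2 * `|Sa|.
    apply: le_trans (ler_norm _) _; rewrite normrN normrM; apply: ler_wpM2r => //.
    by apply: le_trans (dotc_le y2) l1y2.
  by move: d1 d2; clear; move=> *; lra.
have inE : E (r1 * `|Sb| + r2 * `|Sa|).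
  exists (vec0 (if 0 <= Sb then r1 else - r1)), (vec0 (if 0 <= Sa then - r2 else r2)).
  rewrite !vec0_l1 value_eq !vec0_dot -/Sa -/Sb.
  split.
  - by case: ifP => _; rewrite ?normrN ger0_norm.
  - by case: ifP => _; rewrite ?normrN ger0_norm.
  - case: (lerP 0 Sb) => hb; case: (lerP 0 Sa) => ha.
    + by rewrite (ger0_norm hb) (ger0_norm ha); ring.
    + by rewrite (ger0_norm hb) (ltr0_norm ha); ring.
    + by rewrite (ltr0_norm hb) (ger0_norm ha); ring.
    + by rewrite (ltr0_norm hb) (ltr0_norm ha); ring.
have := ub_le_sup ubE inE.
move=> H; apply: le_trans H.
rewrite /Dsize -/r1 -/r2 mulrDr.
have m1 : Num.min r1 r2 <= r1 by rewrite ge_min lexx.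
have m2 : Num.min r1 r2 <= r2 by rewrite ge_min lexx orbT.
rewrite addrC; apply: lerD; apply: ler_wpM2r => //.
Qed.

Unset Implicit Arguments. Set Strict Implicit.

Theorem theorem1 (R : realType) (m : nat) (y1 y2 : 'cV[R]_2) :
  (1 <= m)%N ->
  (dot y1 mp_c, dot y2 mp_c) != (0, 0) ->
  exists k0 : R, 0 < k0 /\
  forall k : R, 0 < k -> k <= k0 ->
  exists C : R, 0 < C /\
  exists T0 : nat, forall T : nat, (T0 <= T)%N ->
  forall x1 x2 : nat -> 'cV[R]_2,
    oftrl_traj m 1 (k / Num.sqrt (T%:R)) y1 y2 x1 x2 ->
    C * Dsize T x1 x2 * Num.sqrt (T%:R) <= RegTot T x1 x2.
Proof.
move=> m1 hy.
have N0 : 0 < dot y1 mp_c ^+ 2 + dot y2 mp_c ^+ 2.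
  have s1 := sqr_ge0 (dot y1 mp_c); have s2 := sqr_ge0 (dot y2 mp_c).
  case: (eqVneq (dot y1 mp_c) 0) => ha.
    case: (eqVneq (dot y2 mp_c) 0) => hb.
      by move: hy; rewrite ha hb eqxx.
    have : 0 < dot y2 mp_c ^+ 2 by rewrite lt0r sqrf_eq0 hb sqr_ge0.
    by move: s1; clear; move=> *; lra.
  have : 0 < dot y1 mp_c ^+ 2 by rewrite lt0r sqrf_eq0 ha sqr_ge0.
  by move: s2; clear; move=> *; lra.
have [k0 [k0p Hk]] := scal m1 N0.
exists k0; split => // k kp kk.
have [C [Cp [T0 HT]]] := Hk k kp kk.
exists C; split => //; exists T0 => T TT x1 x2 tr.
have rec := traj_srec tr.
have [ex1 ex2 _] := tr.
have H := HT T TT _ _ rec (congr1 (fun v => dot v mp_c) ex1) (congr1 (fun v => dot v mp_c) ex2).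
apply: le_trans (regret_lb T x1 x2).
have D0 : 0 <= Dsize T x1 x2 by rewrite /Dsize le_min !radius_ge0.
rewrite mulrAC (mulrC _ (Dsize T x1 x2)).
exact: ler_wpM2l.
Qed.
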